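(* The condition $\big[\sigma_{23}\sigma_{12}\big(\Pi(\omega)\otimes_A \nabla(\nu)\big)\big] = \big[\nabla(\nu)\otimes_A \Pi(\omega)\big]$ in $\Omega^1_B\otimes_Bq_!(\Omega^1_A)\otimes_Bq_!(\Omega^1_A)$ holds for all $\omega\in\Omega^1_A$. The induced spinorial structure on $\mathbb{S}^3_\theta$ reads explicitly as \[ \mathcal{E}_{B} = \frac{\mathcal{E}}{f\, \mathcal{E}}\quad,\quad \gamma_{B}\big(\mathrm{d} z^{i} \otimes_{B} e_{\alpha}\big) = - \Big(\sum_{k,l=1}^4 g_{kl}\, z^{k}\, \gamma_{\theta}^{l}\, \gamma_{\theta}^{i} + z^{i} \Big) \,e_{\alpha}\quad,\quad \nabla^{\mathrm{sp}}_{B} (e_{\alpha}) = \frac{1}{2}\, \sum_{i,j,k,l=1}^4 g_{ij}\, g_{kl}\, z^{k}\, \mathrm{d} z^{i} \otimes_{B} \gamma_{\theta}^{j}\, \gamma_{\theta}^{l}\, e_{\alpha}\quad. \]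
   Context: Setting of $\mathbb{R}^4_\theta$: $A = \mathbb{C}[z^{1},\dots,z^{4}]/(z^{i} z^{j} - R^{ji} z^{j} z^{i})$ with $R$ the matrix with rows $(1,e^{-i\theta},1,e^{i\theta})$, $(e^{i\theta},1,e^{-i\theta},1)$, $(1,e^{i\theta},1,e^{-i\theta})$, $(e^{-i\theta},1,e^{i\theta},1)$; $\Omega^1_A$ free left module on $\mathrm{d} z^i$ with $\mathrm{d} z^i z^j = R^{ji}z^j\mathrm{d} z^i$; metric $g=\sum g_{ij}\mathrm{d} z^i\otimes_A \mathrm{d} z^j$, $(g_{ij})=\tfrac12$ times the matrix with rows $(0,0,1,0),(0,0,0,1),(1,0,0,0),(0,1,0,0)$, $g^{-1}(\mathrm{d} z^i\otimes_A\mathrm{d} z^j)=g^{ij}$ with $(g^{ij})$ twice that matrix; $\nabla(\mathrm{d} z^i)=0$, $\sigma(\mathrm{d} z^i\otimes_A\mathrm{d} z^j)=R^{ji}\mathrm{d} z^j\otimes_A\mathrm{d} z^i$; spinors $\mathcal{E}=A^4$ with basis $e_\alpha$, $\nabla^{\mathrm{sp}}(e_\alpha)=0$, $\gamma(\mathrm{d} z^i\otimes_A e_\alpha)=\gamma^i_\theta e_\alpha$ with the $\theta$-deformed gamma matrices $\gamma^i_\theta$ (satisfying $\gamma^i_\theta\gamma^j_\theta + R^{ji}\gamma^j_\theta\gamma^i_\theta = -2g^{ij}I_4$), and $\gamma_{[2]}=\gamma\circ(\mathrm{id}\otimes_A\gamma)$. The sphere algebra is $B=A/(f)$ with quotient map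 $q$, $f = \tfrac{1}{2}(\sum_{i,j} g_{ij} z^{i} z^{j} - 1)$ central; $\nu := \mathrm{d} f = \sum_{i,j} g_{ij} z^{i}\mathrm{d} z^{j}$ is central with $g^{-1}(\nu\otimes_A\nu)=1$. $q_!(\Omega^1_A)=\Omega^1_A/(f\Omega^1_A\cup\Omega^1_A f)$, $\Omega^1_B = q_!(\Omega^1_A)/B[\mathrm{d} f]B$, $\Pi(\omega) = \omega - g^{-1}(\omega\otimes_A\nu)\,\nu$ (so $\Pi(\mathrm{d} z^i) = \mathrm{d} z^i - z^i\nu$), $\sigma_{12}=\sigma\otimes_A\mathrm{id}$, $\sigma_{23}=\mathrm{id}\otimes_A\sigma$. The induced spinorial structure is defined by $\mathcal{E}_B = q_!(\mathcal{E})\cong\mathcal{E}/f\mathcal{E}$, $\gamma_B([\omega]\otimes_B[s]) = [\gamma_{[2]}(\Pi(\omega)\otimes_A\nu\otimes_A s)]$ and $\nabla^{\mathrm{sp}}_B([s]) = [\nabla^{\mathrm{sp}}(s) + \tfrac12(\mathrm{id}\otimes_A\gamma_{[2]})(\nabla(\nu)\otimes_A\nu\otimes_A s)]$; square brackets for equivalence classes are suppressed in the formulas of the claim. *)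

(* Defs.v *)
From mathcomp Require Import all_boot all_algebra.
From mathcomp Require Import reals complex.
From mathcomp Require Import mpoly.

Set Implicit Arguments.
Unset Strict Implicit.
Unset Printing Implicit Defensive.

Import GRing.Theory Num.Theory.
Local Open Scope ring_scope.

Section Theta.
Variable R : realType.
Local Notation C := (R[i]).
(* q stands for e^{i theta}; hence e^{-i theta} = q^-1 *)
Variable q : C.

(* The algebra A = C<z1..z4>/(z^i z^j - R^{ji} z^j z^i), represented on its
   PBW basis of ordered monomials z^m = z1^m1 z2^m2 z3^m3 z4^m4
   (the underlying C-vector space of {mpoly C[4]}), with twisted product. *)
Definition A := {mpoly C[4]}.

Definition Rm (a b : 'I_4) : C :=
  nth 0 (nth [::] [:: [:: 1; q^-1; 1; q];
                      [:: q; 1; q^-1; 1];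
                      [:: 1; q; 1; q^-1];
                      [:: q^-1; 1; q; 1]] a) b.

Definition Pm (a b : 'I_4) : C :=
  nth 0 (nth [::] [:: [:: 0; 0; 1; 0];
                      [:: 0; 0; 0; 1];
                      [:: 1; 0; 0; 0];
                      [:: 0; 1; 0; 0]] a) b.
Definition gl (a b : 'I_4) : C := 2^-1 * Pm a b.
Definition ginv (a b : 'I_4) : C := 2 * Pm a b.

(* z^m z^n = tw m n z^(m+n), obtained by moving every z^b of z^n to the left
   of every z^a of z^m with a > b, using z^a z^b = R^{ba} z^b z^a. *)
Definition tw (m n : 'X_{1..4}) : C :=
  \prod_(a < 4) \prod_(b < 4 | (b < a)%N) Rm b a ^+ (m a * n b).

Definition tmul (p r : A) : A :=
  \sum_(m <- msupp p) \sum_(n <- msupp r) (p@_m * r@_n * tw m n) *: 'X_[(m + n)%MM].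

Definition z (i : 'I_4) : A := 'X_i.

(* the algebra automorphism sigma_i with  dz^i a = sigma_i(a) dz^i
   (determined by dz^i z^j = R^{ji} z^j dz^i) *)
Definition sig (i : 'I_4) (p : A) : A :=
  \sum_(m <- msupp p) (p@_m * \prod_(j < 4) Rm j i ^+ m j) *: 'X_[m].

(* Free left A-modules, written in coordinates w.r.t. their bases:
   Om1 : Omega^1_A, basis dz^i;
   Om2 : Omega^1_A (x)_A Omega^1_A, basis dz^i (x) dz^j;
   Om3 : Omega^1 (x)_A Omega^1 (x)_A Omega^1, basis dz^i (x) dz^j (x) dz^k;
   Sp  : E = A^4, basis e_alpha;
   OmSp : Omega^1 (x)_A E, basis dz^i (x) e_alpha;
   Om2Sp : Omega^1 (x) Omega^1 (x) E;  Om3Sp : Omega^1 (x) Omega^1 (x) Omega^1 (x) E. *)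
Definition Om1 := 'I_4 -> A.
Definition Om2 := 'I_4 -> 'I_4 -> A.
Definition Om3 := 'I_4 -> 'I_4 -> 'I_4 -> A.
Definition Sp := 'I_4 -> A.
Definition OmSp := 'I_4 -> 'I_4 -> A.
Definition Om2Sp := 'I_4 -> 'I_4 -> 'I_4 -> A.
Definition Om3Sp := 'I_4 -> 'I_4 -> 'I_4 -> 'I_4 -> A.

Definition dz (i : 'I_4) : Om1 := fun k => if k == i then 1 else 0.
Definition e (al : 'I_4) : Sp := fun b => if b == al then 1 else 0.

(* the exterior derivative d : A -> Omega^1_A (unique derivation with
   d z^i = dz^i), on the PBW basis *)
Definition dA (p : A) : Om1 := fun i =>
  \sum_(m <- msupp p)
     (p@_m * (m i)%:R * \prod_(j < 4 | (i < j)%N) Rm j i ^+ m j)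
       *: 'X_[mnm_sub m (mnm1 i)].

(* tensor products over A (coefficients are moved to the left using
   dz^i a = sigma_i(a) dz^i) *)
Definition tens11 (w v : Om1) : Om2 := fun i j => tmul (w i) (sig i (v j)).
Definition tens12 (w : Om1) (T : Om2) : Om3 :=
  fun i j k => tmul (w i) (sig i (T j k)).
Definition tens21 (T : Om2) (v : Om1) : Om3 :=
  fun i j k => tmul (T i j) (sig i (sig j (v k))).
Definition tensE (w : Om1) (s : Sp) : OmSp := fun i al => tmul (w i) (sig i (s al)).
Definition tens1E (w : Om1) (X : OmSp) : Om2Sp :=
  fun i j al => tmul (w i) (sig i (X j al)).
Definition tens2E (T : Om2) (X : OmSp) : Om3Sp :=
  fun i j k al => tmul (T i j) (sig i (sig j (X k al))).

Definition fA : A :=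
  2^-1 *: (\sum_(i < 4) \sum_(j < 4) gl i j *: tmul (z i) (z j) - 1).
Definition nu : Om1 := dA fA.

Definition ginvT (T : Om2) : A := \sum_(i < 4) \sum_(j < 4) ginv i j *: T i j.

(* Levi-Civita connection: nabla(dz^j) = 0 + left Leibniz rule *)
Definition nabla (w : Om1) : Om2 := fun i j => dA (w j) i.

(* braiding sigma(dz^a (x) dz^b) = R^{ba} dz^b (x) dz^a, and sigma_12, sigma_23 *)
Definition sigma12 (U : Om3) : Om3 := fun i j k => Rm i j *: U j i k.
Definition sigma23 (U : Om3) : Om3 := fun i j k => Rm j k *: U i k j.

Definition Pi (w : Om1) : Om1 := fun j => w j - tmul (ginvT (tens11 w nu)) (nu j).

Section Spin.
Variable gam : 'I_4 -> 'M[C]_4.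

(* Clifford action gamma(dz^i (x) e_al) = gamma^i e_al *)
Definition gamma (X : OmSp) : Sp :=
  fun b => \sum_(i < 4) \sum_(al < 4) gam i b al *: X i al.
(* gamma_[2] = gamma o (id (x) gamma) *)
Definition gamma2 (Y : Om2Sp) : Sp := gamma (fun i => gamma (Y i)).
Definition idgamma2 (Z : Om3Sp) : OmSp := fun i => gamma2 (Z i).
(* spin connection with nabla^sp(e_al) = 0 *)
Definition nablaSp (s : Sp) : OmSp := fun i al => dA (s al) i.

(* induced structure on representatives *)
Definition gammaB (w : Om1) (s : Sp) : Sp := gamma2 (tens1E (Pi w) (tensE nu s)).
Definition nablaB (s : Sp) : OmSp :=
  fun i al => nablaSp s i al + 2^-1 *: idgamma2 (tens2E (nabla nu) (tensE nu s)) i al.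
End Spin.

(* equality of classes:
   in E_B = E / f E *)
Definition eqEB (s s' : Sp) : Prop :=
  exists t : Sp, forall al, s al - s' al = tmul fA (t al).
(* in Omega^1_B (x)_B E_B = (Omega^1 (x)_A E) / (f (Omega^1 (x) E) + nu (x) E) *)
Definition eqOmEB (X X' : OmSp) : Prop :=
  exists (V : OmSp) (W : Sp), forall i al,
    X i al - X' i al = tmul fA (V i al) + tensE nu W i al.
(* in Omega^1_B (x)_B q_!(Omega^1_A) (x)_B q_!(Omega^1_A)
   = Omega^1 (x) Omega^1 (x) Omega^1 / (f Om3 + nu (x) Om2) *)
Definition eqOm3B (U U' : Om3) : Prop :=
  exists (V : Om3) (W : Om2), forall i j k,
    U i j k - U' i j k = tmul fA (V i j k) + tens12 nu W i j k.

End Theta.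

(* Main.v *)
Require Import Defs.
From mathcomp Require Import all_boot all_algebra.
From mathcomp Require Import reals complex.
From mathcomp Require Import mpoly.
From mathcomp Require Import ring.
Import GRing.Theory Num.Theory.
Local Open Scope ring_scope.

Set Implicit Arguments.
Unset Strict Implicit.
Unset Printing Implicit Defensive.

Section Aux.
Variable R : realType.
Local Notation C := (R[i]).
Local Notation AA := {mpoly C[4]}.

Definition Lin (G : 'X_{1..4} -> AA) (p : AA) : AA :=
  \sum_(m <- msupp p) p@_m *: G m.

Lemma LinE G p (s : seq 'X_{1..4}) : uniq s -> {subset msupp p <= s} ->
  Lin G p = \sum_(m <- s) p@_m *: G m.
Proof.
move=> us sub.
rewrite (bigID (fun m => m \in msupp p)) /= [X in _ + X]big1 ?addr0; last first.
  by move=> m /memN_msupp_eq0 ->; rewrite scale0r.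
rewrite -big_filter /Lin; apply: perm_big.
apply: uniq_perm; [exact: msupp_uniq | exact: filter_uniq | ].
move=> m; rewrite mem_filter; apply/idP/andP => [h|[]//].
by split => //; exact: sub.
Qed.

Lemma LinD G p r : Lin G (p + r) = Lin G p + Lin G r.
Proof.
set s := undup (msupp p ++ msupp r ++ msupp (p + r)).
have us : uniq s by apply: undup_uniq.
rewrite !(@LinE G _ s) //; last first.
- by move=> m h; rewrite mem_undup !mem_cat h ?orbT.
- by move=> m h; rewrite mem_undup !mem_cat h ?orbT.
- by move=> m h; rewrite mem_undup !mem_cat h ?orbT.
by rewrite -big_split /=; apply: eq_bigr => m _; rewrite mcoeffD scalerDl.
Qed.

Lemma LinZ G c p : Lin G (c *: p) = c *: Lin G p.
Proof.
set s := undup (msupp p ++ msupp (c *: p)).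
have us : uniq s by apply: undup_uniq.
rewrite !(@LinE G _ s) //; last first.
- by move=> m h; rewrite mem_undup !mem_cat h ?orbT.
- by move=> m h; rewrite mem_undup !mem_cat h ?orbT.
by rewrite scaler_sumr; apply: eq_bigr => m _; rewrite mcoeffZ scalerA.
Qed.

Lemma Lin0 G : Lin G 0 = 0.
Proof. by rewrite /Lin msupp0 big_nil. Qed.

Lemma LinN G p : Lin G (- p) = - Lin G p.
Proof. by rewrite -scaleN1r LinZ scaleN1r. Qed.

Lemma LinB G p r : Lin G (p - r) = Lin G p - Lin G r.
Proof. by rewrite LinD LinN. Qed.

Lemma Lin_sum G (I : Type) (s : seq I) (P : pred I) (F : I -> AA) :
  Lin G (\sum_(i <- s | P i) F i) = \sum_(i <- s | P i) Lin G (F i).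
Proof.
by elim/big_rec2: _ => [|i x y _ <-]; rewrite ?Lin0 ?LinD.
Qed.

Lemma LinX G m : Lin G 'X_[m] = G m.
Proof. by rewrite /Lin msuppX big_seq1 mcoeffX eqxx scale1r. Qed.

Lemma Lin1 G : Lin G 1 = G 0%MM.
Proof. by rewrite -mpolyX0 LinX. Qed.

Lemma LinId p : Lin (fun m => 'X_[m]) p = p.
Proof. by rewrite /Lin -mpolyE. Qed.

Lemma LinGD G1 G2 p : Lin (fun m => G1 m + G2 m) p = Lin G1 p + Lin G2 p.
Proof. by rewrite /Lin -big_split; apply: eq_bigr => m _; rewrite scalerDr. Qed.

Lemma LinGZ c G p : Lin (fun m => c *: G m) p = c *: Lin G p.
Proof. by rewrite /Lin scaler_sumr; apply: eq_bigr => m _; rewrite !scalerA mulrC. Qed.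

Lemma Lin_ext G1 G2 p : G1 =1 G2 -> Lin G1 p = Lin G2 p.
Proof. by move=> h; apply: eq_bigr => m _; rewrite h. Qed.

End Aux.

Lemma ord4_ind (P : 'I_4 -> Prop) :
  P (@Ordinal 4 0 isT) -> P (@Ordinal 4 1 isT) -> P (@Ordinal 4 2 isT) ->
  P (@Ordinal 4 3 isT) -> forall a, P a.
Proof.
move=> p0 p1 p2 p3 [[|[|[|[|n]]]] hn] //.
- by rewrite (bool_irrelevance hn isT).
- by rewrite (bool_irrelevance hn isT).
- by rewrite (bool_irrelevance hn isT).
- by rewrite (bool_irrelevance hn isT).
Qed.

Definition pr (a : 'I_4) : 'I_4 := Ordinal (ltn_pmod (a + 2) (isT : (0 < 4)%N)).

Lemma prK : involutive pr.
Proof. by elim/ord4_ind; apply/val_inj. Qed.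

Lemma pr_inj : injective pr.
Proof. exact: (can_inj prK). Qed.

Lemma pr_neq a : (pr a == a) = false.
Proof. by elim/ord4_ind: a. Qed.

Section Model.
Variable R : realType.
Local Notation C := (R[i]).
Local Notation AA := {mpoly C[4]}.
Variable q : C.
Hypothesis hq : q != 0.

Lemma Rm_diag a : Rm q a a = 1.
Proof. by elim/ord4_ind: a. Qed.

Lemma RmRm a b : Rm q a b * Rm q b a = 1.
Proof.
by elim/ord4_ind: a; elim/ord4_ind: b; rewrite /Rm /= ?mulr1 ?mul1r ?mulfV ?mulVf.
Qed.

Lemma Rm_prl a b : Rm q (pr a) b = Rm q b a.
Proof. by elim/ord4_ind: a; elim/ord4_ind: b. Qed.

Lemma Rm_prr a b : Rm q a (pr b) = Rm q b a.
Proof. by elim/ord4_ind: a; elim/ord4_ind: b. Qed.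

Lemma Pm_pr a b : Pm R a b = (b == pr a)%:R.
Proof. by elim/ord4_ind: a; elim/ord4_ind: b. Qed.

Lemma natr_false : (false%:R : C) = 0. Proof. by []. Qed.
Lemma natr_true : (true%:R : C) = 1. Proof. by []. Qed.

Lemma sum_delta (V : lmodType C) (F : 'I_4 -> V) c :
  \sum_(b < 4) (b == c)%:R *: F b = F c.
Proof.
rewrite (bigD1 c) //= eqxx scale1r big1 ?addr0 // => b /negbTE ->.
by rewrite scale0r.
Qed.

Lemma sum_deltaC (F : 'I_4 -> C) c : \sum_(b < 4) (b == c)%:R * F b = F c.
Proof.
rewrite (bigD1 c) //= eqxx mul1r big1 ?addr0 // => b /negbTE ->.
by rewrite mul0r.
Qed.

Lemma twDl m1 m2 n : tw q (m1 + m2)%MM n = tw q m1 n * tw q m2 n.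
Proof.
rewrite /tw -big_split; apply: eq_bigr => a _ /=; rewrite -big_split.
by apply: eq_bigr => b _ /=; rewrite mnmDE mulnDl exprD.
Qed.

Lemma twDr m n1 n2 : tw q m (n1 + n2)%MM = tw q m n1 * tw q m n2.
Proof.
rewrite /tw -big_split; apply: eq_bigr => a _ /=; rewrite -big_split.
by apply: eq_bigr => b _ /=; rewrite mnmDE mulnDr exprD.
Qed.

Lemma tw0l n : tw q 0%MM n = 1.
Proof. by rewrite /tw big1 // => a _; rewrite big1 // => b _; rewrite mnm0E mul0n expr0. Qed.

Lemma tw0r m : tw q m 0%MM = 1.
Proof. by rewrite /tw big1 // => a _; rewrite big1 // => b _; rewrite mnm0E muln0 expr0. Qed.

Lemma twU a b : tw q U_(a) U_(b) = if (b < a)%N then Rm q b a else 1.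
Proof.
rewrite /tw (bigD1 a) //= [X in _ * X]big1 ?mulr1; last first.
  move=> a' /negbTE ne; rewrite big1 // => b' _.
  by rewrite mnm1E eq_sym ne mul0n expr0.
rewrite mnm1E eqxx.
case: ifP => ba.
  rewrite (bigD1 b) //= mnm1E eqxx expr1 big1 ?mulr1 // => b' /andP[_ /negbTE ne].
  by rewrite mnm1E eq_sym ne expr0.
rewrite big1 // => b' lt; rewrite mnm1E.
case: eqP => [e|]; last by rewrite expr0.
by move: ba; rewrite e lt.
Qed.

Lemma twU_swap a b : tw q U_(a) U_(b) = Rm q b a * tw q U_(b) U_(a).
Proof.
rewrite !twU; case: (ltngtP a b) => h.
- by rewrite RmRm.
- by rewrite mulr1.
- by rewrite (val_inj h) Rm_diag mulr1.
Qed.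

Lemma sigE i p : sig q i p = Lin (fun m => (\prod_(j < 4) Rm q j i ^+ m j) *: 'X_[m]) p.
Proof. by apply: eq_bigr => m _; rewrite scalerA. Qed.

Lemma sigD i p r : sig q i (p + r) = sig q i p + sig q i r.
Proof. by rewrite !sigE LinD. Qed.
Lemma sigZ i c p : sig q i (c *: p) = c *: sig q i p.
Proof. by rewrite !sigE LinZ. Qed.
Lemma sig0 i : sig q i 0 = 0.
Proof. by rewrite !sigE Lin0. Qed.
Lemma sigX i m : sig q i 'X_[m] = (\prod_(j < 4) Rm q j i ^+ m j) *: 'X_[m].
Proof. by rewrite sigE LinX. Qed.
Lemma sig1 i : sig q i 1 = 1.
Proof.
by rewrite -mpolyX0 sigX big1 ?scale1r // => j _; rewrite mnm0E expr0.
Qed.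
Lemma sig_sum i (I : Type) (s : seq I) (P : pred I) (F : I -> AA) :
  sig q i (\sum_(k <- s | P k) F k) = \sum_(k <- s | P k) sig q i (F k).
Proof. by rewrite sigE Lin_sum; apply: eq_bigr => k _; rewrite sigE. Qed.

Lemma sig_pr i p : sig q i (sig q (pr i) p) = p.
Proof.
rewrite {2}/sig sig_sum [RHS]mpolyE; apply: eq_bigr => m _.
rewrite sigZ sigX scalerA -mulrA -big_split /=.
rewrite big1 ?mulr1 // => j _.
by rewrite -exprMn Rm_prr mulrC RmRm expr1n.
Qed.

Lemma sigUX i a : sig q i 'X_a = Rm q a i *: 'X_a.
Proof.
rewrite sigX (bigD1 a) //= mnm1E eqxx expr1 big1 ?mulr1 // => j /negbTE ne.
by rewrite mnm1E eq_sym ne expr0.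
Qed.

Lemma dAE i p : dA q p i =
  Lin (fun m => ((m i)%:R * \prod_(j < 4 | (i < j)%N) Rm q j i ^+ m j)
                   *: 'X_[(m - U_(i))%MM]) p.
Proof. by apply: eq_bigr => m _; rewrite scalerA mulrA. Qed.

Lemma tmulE p r : tmul q p r = Lin (fun m => Lin (fun n => tw q m n *: 'X_[(m + n)%MM]) r) p.
Proof.
apply: eq_bigr => m _; rewrite /Lin scaler_sumr; apply: eq_bigr => n _.
by rewrite !scalerA.
Qed.

Lemma tmulDl p1 p2 r : tmul q (p1 + p2) r = tmul q p1 r + tmul q p2 r.
Proof. by rewrite !tmulE LinD. Qed.
Lemma tmulZl c p r : tmul q (c *: p) r = c *: tmul q p r.
Proof. by rewrite !tmulE LinZ. Qed.
Lemma tmul0l r : tmul q 0 r = 0.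
Proof. by rewrite tmulE Lin0. Qed.
Lemma tmulNl p r : tmul q (- p) r = - tmul q p r.
Proof. by rewrite tmulE LinN -tmulE. Qed.
Lemma tmulBl p1 p2 r : tmul q (p1 - p2) r = tmul q p1 r - tmul q p2 r.
Proof. by rewrite tmulDl tmulNl. Qed.
Lemma tmul_suml (I : Type) (s : seq I) (P : pred I) (F : I -> AA) r :
  tmul q (\sum_(k <- s | P k) F k) r = \sum_(k <- s | P k) tmul q (F k) r.
Proof. by rewrite tmulE Lin_sum; apply: eq_bigr => k _; rewrite tmulE. Qed.

Lemma tmulDr p r1 r2 : tmul q p (r1 + r2) = tmul q p r1 + tmul q p r2.
Proof. by rewrite !tmulE -LinGD; apply: Lin_ext => m; rewrite LinD. Qed.
Lemma tmulZr c p r : tmul q p (c *: r) = c *: tmul q p r.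
Proof. by rewrite !tmulE -LinGZ; apply: Lin_ext => m; rewrite LinZ. Qed.
Lemma tmul0r p : tmul q p 0 = 0.
Proof.
rewrite tmulE (@Lin_ext _ _ (fun _ => 0)); last by move=> m; rewrite Lin0.
by rewrite /Lin big1 // => m _; rewrite scaler0.
Qed.
Lemma tmulNr p r : tmul q p (- r) = - tmul q p r.
Proof. by rewrite -scaleN1r tmulZr scaleN1r. Qed.
Lemma tmulBr p r1 r2 : tmul q p (r1 - r2) = tmul q p r1 - tmul q p r2.
Proof. by rewrite tmulDr tmulNr. Qed.
Lemma tmul_sumr (I : Type) (s : seq I) (P : pred I) (F : I -> AA) p :
  tmul q p (\sum_(k <- s | P k) F k) = \sum_(k <- s | P k) tmul q p (F k).
Proof. by elim/big_rec2: _ => [|k x y _ <-]; rewrite ?tmul0r ?tmulDr. Qed.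

Lemma tmulXX m n : tmul q 'X_[m] 'X_[n] = tw q m n *: 'X_[(m + n)%MM].
Proof. by rewrite tmulE !LinX. Qed.

Lemma tmul1l p : tmul q 1 p = p.
Proof.
rewrite tmulE Lin1 -[RHS]LinId; apply: Lin_ext => n.
by rewrite tw0l scale1r add0m.
Qed.

Lemma tmul1r p : tmul q p 1 = p.
Proof.
rewrite tmulE -[RHS]LinId; apply: Lin_ext => m.
by rewrite Lin1 tw0r scale1r addm0.
Qed.


Definition F2 : AA := \sum_(i < 4) 'X_[(U_(i) + U_(pr i))%MM].

Lemma fAE : fA q = 2^-1 *: (2^-1 *: F2 - 1).
Proof.
congr (_ *: (_ - _)); rewrite /F2 scaler_sumr; apply: eq_bigr => i _.
under eq_bigr do rewrite /gl Pm_pr mulrC -scalerA.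
rewrite sum_delta /z tmulXX twU Rm_prl Rm_diag if_same scale1r //.
Qed.

Lemma prod_pair i k (P : pred 'I_4) : (k == i) || (k == pr i) ->
  \prod_(j < 4 | P j) Rm q j k ^+ ((i == j) + (pr i == j))%N = 1.
Proof.
move=> hk; apply: big1 => j _.
have hR : forall j', (j' == i) || (j' == pr i) -> Rm q j' k = 1.
  move=> j' hj; case/orP: hk => /eqP ->; case/orP: hj => /eqP ->;
  by rewrite ?Rm_diag ?Rm_prl ?Rm_prr ?Rm_diag.
case: (eqVneq i j) => [<-|ne1]; first by rewrite hR ?eqxx // expr1n.
case: (eqVneq (pr i) j) => [<-|ne2]; first by rewrite hR ?eqxx ?orbT // expr1n.
by rewrite expr0.
Qed.

Lemma pr_eq i k : (pr i == k) = (i == pr k).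
Proof. by apply/eqP/eqP => [<-|->]; rewrite prK. Qed.

Lemma nuE k : nu q k = 2^-1 *: 'X_(pr k).
Proof.
rewrite /nu dAE fAE LinZ LinB LinZ Lin1 mnm0E mul0r scale0r subr0 /F2 Lin_sum.
under eq_bigr => i _.
  rewrite LinX mnmDE !mnm1E natrD mulrDl scalerDl.
  over.
rewrite big_split /=.
have e1 : forall i, ((i == k)%:R * \prod_(j < 4 | (k < j)%N)
      Rm q j k ^+ (U_(i) + U_(pr i))%MM j) *: 'X_[(U_(i) + U_(pr i) - U_(k))%MM]
    = (i == k)%:R *: ('X_(pr k) : AA).
  move=> i; case: (eqVneq i k) => [<-|_]; last by rewrite mul0r !scale0r.
  under eq_bigr do rewrite mnmDE !mnm1E.
  by rewrite prod_pair ?eqxx // mulr1 addmC addmK.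
have e2 : forall i, ((pr i == k)%:R * \prod_(j < 4 | (k < j)%N)
      Rm q j k ^+ (U_(i) + U_(pr i))%MM j) *: 'X_[(U_(i) + U_(pr i) - U_(k))%MM]
    = (i == pr k)%:R *: ('X_(pr k) : AA).
  move=> i; rewrite pr_eq; case: (eqVneq i (pr k)) => [->|_]; last by rewrite mul0r !scale0r.
  under eq_bigr do rewrite mnmDE !mnm1E.
  rewrite prod_pair; last by rewrite prK eqxx orbT.
  by rewrite mulr1 prK addmK.
under eq_bigr do rewrite e1.
under [X in _ + X]eq_bigr do rewrite e2.
rewrite !(sum_delta (fun _ => ('X_(pr k) : AA))).
congr (_ *: _); rewrite -[X in _ *: (X + X)]scale1r -scalerDl scalerA.
have -> : (2:C)^-1 * (1 + 1) = 1 by rewrite mulVf // pnatr_eq0.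
by rewrite scale1r.
Qed.


Lemma nablanuE i j : nabla q (nu q) i j = gl R i j *: 1.
Proof.
rewrite /nabla nuE dAE LinZ LinX /gl Pm_pr mnm1E pr_eq.
case: (eqVneq j (pr i)) => [->|_]; rewrite ?natr_false ?natr_true; last by rewrite mul0r scale0r scaler0 mulr0 scale0r.
rewrite prK mul1r.
rewrite big1 ?mulr1; last first.
  by move=> l _; rewrite mnm1E; case: eqVneq => [->|_]; rewrite ?Rm_diag ?expr1n ?expr0.
have -> : (U_(i) - U_(i))%MM = 0%MM by apply/mnmP => l; rewrite mnmBE subnn mnm0E.
by rewrite mpolyX0 scale1r.
Qed.

Lemma part1 (w : Om1 R) :
  eqOm3B q (sigma23 q (sigma12 q (tens12 q (Pi q w) (nabla q (nu q)))))
           (tens21 q (nabla q (nu q)) (Pi q w)).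
Proof.
exists (fun _ _ _ => 0), (fun _ _ => 0) => i j k.
rewrite tmul0r /tens12 sig0 tmul0r addr0; apply/eqP; rewrite subr_eq0; apply/eqP.
rewrite /sigma23 /sigma12 /tens21 !nablanuE sigZ sig1 tmulZr tmul1r tmulZl tmul1l scalerA.
rewrite /gl Pm_pr; case: (eqVneq j (pr i)) => [->|_]; last by rewrite !mulr0 !scale0r scaler0.
by rewrite sig_pr Rm_prl RmRm scale1r.
Qed.


Lemma sum_collapse (V : zmodType) (F : 'I_4 -> V) c :
  (forall j, j != c -> F j = 0) -> \sum_(j < 4) F j = F c.
Proof. by move=> h; rewrite (bigD1 c) //= big1 ?addr0 // => j /h. Qed.

Lemma dA_e al b i : dA q (e R al b) i = 0.
Proof.
by rewrite /e; case: ifP => _; rewrite dAE ?Lin1 ?Lin0 // mnm0E mul0r scale0r.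
Qed.

Lemma tensE_e al k a : tensE q (nu q) (e R al) k a = (a == al)%:R *: nu q k.
Proof.
rewrite /tensE /e; case: eqP => _.
  by rewrite sig1 tmul1r natr_true scale1r.
by rewrite sig0 tmul0r natr_false scale0r.
Qed.

Lemma sum_gl (V : lmodType C) k (f : 'I_4 -> C) (a : C) (v : V) :
  \sum_(l < 4) (a * gl R k l * f l) *: v = (a * 2^-1 * f (pr k)) *: v.
Proof.
rewrite (sum_collapse (c := pr k)) => [|l ne]; rewrite /gl Pm_pr ?eqxx ?natr_true ?mulr1 //.
by rewrite (negbTE ne) natr_false !mulr0 mul0r scale0r.
Qed.

Lemma part3 (gam : 'I_4 -> 'M[C]_4) al :
  eqOmEB q (nablaB q gam (e R al))
       (fun i b => 2^-1 *: \sum_(j < 4) \sum_(k < 4) \sum_(l < 4)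
                     (gl R i j * gl R k l * (gam j *m gam l) b al) *: z R k).
Proof.
exists (fun _ _ => 0), (fun _ => 0) => i b.
rewrite tmul0r /tensE sig0 tmul0r addr0; apply/eqP; rewrite subr_eq0; apply/eqP.
rewrite /nablaB /nablaSp dA_e add0r /idgamma2 /gamma2 /gamma /tens2E.
congr (_ *: _).
rewrite [LHS](sum_collapse (c := pr i)); last first.
  move=> j ne; rewrite big1 // => b' _; rewrite big1 ?scaler0 // => k _.
  rewrite big1 // => a _.
  by rewrite nablanuE /gl Pm_pr (negbTE ne) natr_false mulr0 scale0r tmul0l scaler0.
rewrite [RHS](sum_collapse (c := pr i)); last first.
  move=> j ne; rewrite big1 // => k _; rewrite big1 // => l _.
  by rewrite /gl Pm_pr (negbTE ne) natr_false mulr0 mul0r !mul0r scale0r.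
have inner : forall b' k a, gam k b' a *: tmul q (nabla q (nu q) i (pr i))
      (sig q i (sig q (pr i) (tensE q (nu q) (e R al) k a)))
    = (a == al)%:R *: ((gam k b' a * 2^-1 * 2^-1) *: ('X_(pr k) : AA)).
  move=> b' k a.
  rewrite nablanuE tmulZl tmul1l sig_pr tensE_e nuE /gl Pm_pr eqxx natr_true mulr1.
  by rewrite !scalerA; congr (_ *: _); ring.
under eq_bigr => b' _.
  under eq_bigr => k _.
    under eq_bigr => a _ do rewrite inner.
    rewrite (sum_delta (fun a => (gam k b' a * 2^-1 * 2^-1) *: ('X_(pr k) : AA))).
    over.
  rewrite scaler_sumr.
  under eq_bigr => k _ do rewrite scalerA.
  over.
rewrite exchange_big /=.
under [RHS]eq_bigr => k _ do rewrite sum_gl.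
rewrite [RHS](reindex_inj pr_inj) /=.
apply: eq_bigr => k _; rewrite prK -scaler_suml; congr (_ *: _).
rewrite /gl Pm_pr eqxx natr_true mulr1 mxE mulr_sumr; apply: eq_bigr => b' _.
ring.
Qed.


Lemma dzE i j : dz R i j = (j == i)%:R *: 1.
Proof. by rewrite /dz; case: eqP => _; rewrite ?natr_true ?natr_false ?scale1r ?scale0r. Qed.

Lemma ginvT_dz i : ginvT (tens11 q (dz R i) (nu q)) = 'X_i.
Proof.
rewrite /ginvT (sum_collapse (c := i)) => [|a ne]; last first.
  by rewrite big1 // => b _; rewrite /tens11 dzE (negbTE ne) natr_false scale0r tmul0l scaler0.
rewrite (sum_collapse (c := pr i)) => [|b ne]; last first.
  by rewrite /ginv Pm_pr (negbTE ne) natr_false mulr0 scale0r.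
rewrite /tens11 dzE eqxx natr_true scale1r tmul1l nuE sigZ sigUX prK Rm_diag scale1r.
by rewrite /ginv Pm_pr eqxx natr_true mulr1 scalerA mulfV ?scale1r // pnatr_eq0.
Qed.

Lemma Pi_dz i j : Pi q (dz R i) j =
  (j == i)%:R *: 1 - (2^-1 * tw q U_(i) U_(pr j)) *: 'X_[(U_(i) + U_(pr j))%MM].
Proof.
by rewrite /Pi ginvT_dz dzE nuE tmulZr tmulXX scalerA mulrC.
Qed.

Lemma tmul_Pi_X i j k : tmul q (Pi q (dz R i) j) 'X_(pr k) =
  (j == i)%:R *: 'X_(pr k) -
  (2^-1 * (tw q U_(i) U_(pr j) * tw q U_(i) U_(pr k) * tw q U_(pr j) U_(pr k)))
     *: 'X_[(U_(i) + U_(pr j) + U_(pr k))%MM].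
Proof.
rewrite Pi_dz tmulBl tmulZl tmul1l tmulZl tmulXX twDl scalerA.
by congr (_ - _ *: _); rewrite !mulrA.
Qed.

Lemma gammaB_E (gam : 'I_4 -> 'M[C]_4) i al b :
  gammaB q gam (dz R i) (e R al) b =
  \sum_(j < 4) \sum_(k < 4) ((gam j *m gam k) b al * 2^-1 * Rm q (pr k) j)
      *: tmul q (Pi q (dz R i) j) 'X_(pr k).
Proof.
rewrite /gammaB /gamma2 /gamma /tens1E.
apply: eq_bigr => j _.
have inner : forall b' k a, gam k b' a *: tmul q (Pi q (dz R i) j)
    (sig q j (tensE q (nu q) (e R al) k a)) =
    (a == al)%:R *: ((gam k b' a * 2^-1 * Rm q (pr k) j) *: tmul q (Pi q (dz R i) j) 'X_(pr k)).
  move=> b' k a.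
  rewrite tensE_e nuE !sigZ sigUX !tmulZr !scalerA; congr (_ *: _); ring.
under eq_bigr => b' _.
  under eq_bigr => k _.
    under eq_bigr => a _ do rewrite inner.
    rewrite (sum_delta (fun a => (gam k b' a * 2^-1 * Rm q (pr k) j) *: tmul q (Pi q (dz R i) j) 'X_(pr k))).
    over.
  rewrite scaler_sumr.
  under eq_bigr => k _ do rewrite scalerA.
  over.
rewrite exchange_big /=; apply: eq_bigr => k _.
rewrite -scaler_suml; congr (_ *: _).
rewrite mxE !mulr_suml; apply: eq_bigr => b' _; ring.
Qed.


Lemma cliffE (gam : 'I_4 -> 'M[C]_4)
  (hcliff : forall i j : 'I_4,
     gam i *m gam j + Rm q j i *: (gam j *m gam i) = - (2 * ginv R i j)%:M)
  b al j k :
  (gam j *m gam k) b al =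
   - (Rm q k j * (gam k *m gam j) b al) - 4 * Pm R j k * (b == al)%:R.
Proof.
have h := congr1 (fun A : 'M[C]_4 => A b al) (hcliff j k).
move: h; move: (gam j *m gam k) (gam k *m gam j) => A B /=.
rewrite !mxE => h.
have -> : A b al = (A b al + Rm q k j * B b al) - Rm q k j * B b al by rewrite addrK.
rewrite h /ginv -mulNrn -mulr_natr; ring.
Qed.

Lemma PmRm i k : Pm R i k * Rm q i k = Pm R i k.
Proof.
rewrite Pm_pr; case: (eqVneq k (pr i)) => [->|_]; rewrite ?natr_true ?natr_false ?mul0r //.
by rewrite Rm_prr Rm_diag mulr1.
Qed.

Lemma symm_sum (V : lmodType C) (N a : 'I_4 -> 'I_4 -> C)
  (Y : 'I_4 -> 'I_4 -> V) (c : C) :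
  (forall j k, Y k j = Y j k) ->
  (forall j k, a k j = Rm q k j * a j k) ->
  (forall j k, N j k + Rm q k j * N k j = c * Pm R j k) ->
  \sum_(j < 4) \sum_(k < 4) (N j k * a j k) *: Y j k =
  2^-1 *: \sum_(j < 4) (c * a j (pr j)) *: Y j (pr j).
Proof.
move=> hY ha hN.
set S := \sum_(j < 4) \sum_(k < 4) (N j k * a j k) *: Y j k.
have pt : forall j k, (N j k * a j k) *: Y j k + (N k j * a k j) *: Y k j =
    (c * Pm R j k * a j k) *: Y j k.
  move=> j k; rewrite (hY j k) (ha j k) -scalerDl; congr (_ *: _); rewrite -(hN j k); ring.
have h2 : S + S = \sum_(j < 4) (c * a j (pr j)) *: Y j (pr j).
  rewrite {2}/S exchange_big /= /S -big_split /=; apply: eq_bigr => j _.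
  rewrite -big_split /=.
  under eq_bigr => k _ do rewrite pt.
  rewrite (sum_collapse (c := pr j)) => [|k ne]; last first.
    by rewrite Pm_pr (negbTE ne) natr_false mulr0 mul0r scale0r.
  by rewrite Pm_pr eqxx natr_true mulr1.
by rewrite -h2 -mulr2n -(scaler_nat 2 S) scalerA mulVf ?scale1r // pnatr_eq0.
Qed.

Lemma tmul_F2_comm i : tmul q 'X_i F2 = tmul q F2 'X_i.
Proof.
rewrite /F2 tmul_sumr tmul_suml; apply: eq_bigr => j _.
rewrite !tmulXX [X in 'X_[X]]addmC; congr (_ *: _).
rewrite twDr twDl (twU_swap i j) (twU_swap i (pr j)) Rm_prl.
have r := RmRm j i.
transitivity ((Rm q j i * Rm q i j) * (tw q U_(j) U_(i) * tw q U_(pr j) U_(i))); first ring.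
by rewrite r mul1r.
Qed.


Lemma sum_gl2 k (f : 'I_4 -> C) : \sum_(l < 4) gl R k l * f l = 2^-1 * f (pr k).
Proof.
rewrite (sum_collapse (c := pr k)) => [|l ne]; rewrite /gl Pm_pr ?eqxx ?natr_true ?mulr1 //.
by rewrite (negbTE ne) natr_false mulr0 mul0r.
Qed.

Lemma tmulXF2 i : tmul q 'X_i F2 =
  \sum_(j < 4) (tw q U_(i) U_(j) * tw q U_(i) U_(pr j)) *: 'X_[(U_(i) + U_(j) + U_(pr j))%MM].
Proof.
rewrite /F2 tmul_sumr; apply: eq_bigr => j _.
by rewrite tmulXX twDr addmA.
Qed.

Lemma part2 (gam : 'I_4 -> 'M[C]_4)
  (hcliff : forall i j : 'I_4,
     gam i *m gam j + Rm q j i *: (gam j *m gam i) = - (2 * ginv R i j)%:M)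
  i al :
  eqEB q (gammaB q gam (dz R i) (e R al))
       (fun b => - (\sum_(k < 4) \sum_(l < 4)
                      (gl R k l * (gam l *m gam i) b al) *: z R k
                    + (b == al)%:R *: z R i)).
Proof.
exists (fun b => (2 * (b == al)%:R) *: 'X_i) => b.
set d : C := (b == al)%:R.
have hc : forall j k, (gam j *m gam k) b al + Rm q k j * (gam k *m gam j) b al
    = -4 * d * Pm R j k.
  by move=> j k; rewrite (cliffE hcliff b al j k) -/d; ring.
have hc2 : forall k, (gam i *m gam k) b al =
    - (Rm q k i * (gam k *m gam i) b al) - 4 * Pm R i k * d.
  by move=> k; rewrite (cliffE hcliff b al i k).
clearbody d.
rewrite gammaB_E.
set twp := fun j k => tw q U_(i) U_(pr j) * tw q U_(i) U_(pr k) * tw q U_(pr j) U_(pr k).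
set Y := fun j k => ('X_[(U_(i) + U_(pr j) + U_(pr k))%MM] : AA).
have split1 : forall j k, ((gam j *m gam k) b al * 2^-1 * Rm q (pr k) j) *:
     tmul q (Pi q (dz R i) j) 'X_(pr k) =
   ((j == i)%:R * ((gam j *m gam k) b al * 2^-1 * Rm q (pr k) j)) *: 'X_(pr k)
   - ((gam j *m gam k) b al * (2^-1 * Rm q (pr k) j * (2^-1 * twp j k))) *: Y j k.
  by move=> j k; rewrite tmul_Pi_X scalerBr !scalerA; congr (_ *: _ - _ *: _); rewrite /twp; ring.
under eq_bigr => j _ do under eq_bigr => k _ do rewrite split1.
under eq_bigr => j _ do rewrite sumrB.
rewrite sumrB.
have L2E : \sum_(j < 4) \sum_(k < 4) ((gam j *m gam k) b al *
     (2^-1 * Rm q (pr k) j * (2^-1 * twp j k))) *: Y j k =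
   (- (2^-1 * d)) *: tmul q 'X_i F2.
  rewrite (@symm_sum _ (fun j k => (gam j *m gam k) b al)
     (fun j k => 2^-1 * Rm q (pr k) j * (2^-1 * twp j k)) Y (-4 * d)).
  - rewrite tmulXF2 !scaler_sumr; apply: eq_bigr => j _; rewrite !scalerA.
    have -> : Y j (pr j) = 'X_[(U_(i) + U_(j) + U_(pr j))%MM].
      by rewrite /Y prK -!addmA [(U_(pr j) + _)%MM]addmC.
    congr (_ *: _); rewrite /twp prK Rm_diag (twU (pr j) j) Rm_prr Rm_diag if_same.
    have h2 : (2:C)^-1 * 2 = 1 by rewrite mulVf // pnatr_eq0.
    transitivity (- (2^-1 * d) * (tw q U_(i) U_(j) * tw q U_(i) U_(pr j)) *
      ((2^-1 * 2) * (2^-1 * 2))); first ring.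
    by rewrite h2 !mulr1.
  - by move=> j k; rewrite /Y -!addmA [(U_(pr k) + _)%MM]addmC.
  - by move=> j k; rewrite /twp (twU_swap (pr k) (pr j)) !Rm_prl; ring.
  - exact: hc.
rewrite L2E.
rewrite [X in X - _ - _](sum_collapse (c := i)); last first.
  by move=> j ne; apply: big1 => k _; rewrite (negbTE ne) natr_false mul0r scale0r.
have L1E : \sum_(k < 4) ((i == i)%:R * ((gam i *m gam k) b al * 2^-1 * Rm q (pr k) i))
     *: ('X_(pr k) : AA) =
   - \sum_(k < 4) (2^-1 * (gam k *m gam i) b al) *: 'X_(pr k) + (-2 * d) *: 'X_i.
  rewrite -sumrN.
  rewrite [LHS](eq_bigr (fun k => - ((2^-1 * (gam k *m gam i) b al) *: 'X_(pr k))
     + (-2 * d * Pm R i k) *: 'X_(pr k))); last first.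
    move=> k _; rewrite -scaleNr -scalerDl; congr (_ *: _).
    rewrite eqxx natr_true mul1r hc2 Rm_prl.
    have h2 : (2:C)^-1 * 2 = 1 by rewrite mulVf // pnatr_eq0.
    transitivity (-(2^-1 * (gam k *m gam i) b al) * (Rm q k i * Rm q i k)
        - 2 * d * (Pm R i k * Rm q i k) * (2^-1 * 2)); first ring.
    by rewrite RmRm PmRm h2; ring.
  rewrite big_split /=; congr (_ + _).
  rewrite (sum_collapse (c := pr i)) => [|k ne]; last first.
    by rewrite Pm_pr (negbTE ne) natr_false mulr0 scale0r.
  by rewrite Pm_pr eqxx natr_true mulr1 prK.
rewrite L1E.
have TE : \sum_(k < 4) \sum_(l < 4) (gl R k l * (gam l *m gam i) b al) *: z R k =
    \sum_(k < 4) (2^-1 * (gam k *m gam i) b al) *: 'X_(pr k).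
  under eq_bigr => k _ do rewrite -scaler_suml sum_gl2.
  by rewrite (reindex_inj pr_inj) /=; apply: eq_bigr => k _; rewrite prK.
rewrite TE.
rewrite tmulZr fAE tmulZl tmulBl tmulZl tmul1l -tmul_F2_comm.
set U := \sum_(k < 4) _.
set T := tmul q 'X_i F2.
rewrite /z scalerA.
have -> : (2 * d) * 2^-1 = d.
  have h2 : (2:C)^-1 * 2 = 1 by rewrite mulVf // pnatr_eq0.
  by transitivity (d * (2^-1 * 2)); [ring | rewrite h2 mulr1].
rewrite scaleNr !opprK scalerBr scalerA [d * 2^-1]mulrC.
have -> : (-2 * d) *: ('X_i : AA) = - (d *: 'X_i + d *: 'X_i).
  by rewrite -scalerDl -scaleNr; congr (_ *: _); ring.
set x := d *: 'X_i.
set t := (2^-1 * d) *: T.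
ring.
Qed.

End Model.

Theorem proposition4p9 (R : realType) (q : R[i]) (hq : q * (q^*)%C = 1)
  (gam : 'I_4 -> 'M[R[i]]_4)
  (hcliff : forall i j : 'I_4,
     gam i *m gam j + Rm q j i *: (gam j *m gam i) = - (2 * ginv R i j)%:M) :
  (forall w : Om1 R,
     eqOm3B q (sigma23 q (sigma12 q (tens12 q (Pi q w) (nabla q (nu q)))))
              (tens21 q (nabla q (nu q)) (Pi q w)))
  /\
  (forall i al : 'I_4,
     eqEB q (gammaB q gam (dz R i) (e R al))
       (fun b => - (\sum_(k < 4) \sum_(l < 4)
                      (gl R k l * (gam l *m gam i) b al) *: z R k
                    + (b == al)%:R *: z R i)))
  /\
  (forall al : 'I_4,
     eqOmEB q (nablaB q gam (e R al))
       (fun i b => 2^-1 *: \sum_(j < 4) \sum_(k < 4) \sum_(l < 4)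
                     (gl R i j * gl R k l * (gam j *m gam l) b al) *: z R k)).
Proof.
have hq0 : q != 0.
  apply/eqP => q0; move: hq; rewrite q0 mul0r => /eqP; rewrite eq_sym oner_eq0.
  by [].
split; [|split].
- by move=> w; apply: part1.
- by move=> i al; apply: part2.
- by move=> al; apply: part3.
Qed.
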